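(* Let $L_0$ be shared between frames $\mathcal{F}_1,\mathcal{F}_2$, let $C_s\subseteq\mathrm{LEFT}_0$, and let $\mathcal{B}_c\in\mathrm{lruns}_{C_{cut,0}}(\mathcal{F}_1)\cap\mathrm{lruns}_{C_{cut,0}}(\mathcal{F}_2)$. (1) $J^{1,C_s}_{C_{cut,0}}(\mathcal{B}_c)=J^{2,C_s}_{C_{cut,0}}(\mathcal{B}_c)$. (2) Assume $\mathrm{lruns}_{C_{cut,0}}(\mathcal{F}_2)\subseteq\mathrm{lruns}_{C_{cut,0}}(\mathcal{F}_1)$. Let $C_o\subseteq\mathrm{RIGHT}_2$ and $\mathcal{B}_o\in\mathrm{lruns}_{C_o}(\mathcal{F}_2)$. Then $$J^{2,C_s}_{C_o}(\mathcal{B}_o)=\bigcup_{\mathcal{B}'_c\in J^{2,C_{cut,0}}_{C_o}(\mathcal{B}_o)} J^{1,C_s}_{C_{cut,0}}(\mathcal{B}'_c).$$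
   Context: A frame consists of pairwise disjoint sets of locations $\mathcal{LO}$, channels $\mathcal{CH}$, data $\mathcal{D}$. Each channel $c$ either has both a sender $\mathrm{sender}(c)$ and a recipient $\mathrm{recipient}(c)$ (possibly equal), or neither; $\mathrm{chans}(\ell)$ is the set of channels of which $\ell$ is sender or recipient. Each location $\ell$ has a prefix-closed set $\mathrm{traces}(\ell)$ of finite or infinite sequences of labels $(c,v)$, $c\in\mathrm{chans}(\ell)$, $v\in\mathcal{D}$. Events are drawn from a common set $E$ with functions $\mathrm{chan}$ and $\mathrm{msg}$. A system of events $(B,\preceq)$ has $B\subseteq E$ and $\preceq$ a partial order with finitely many predecessors per event; it is an execution of frame $\mathcal{F}_i$ ($\in\mathrm{exec}(\mathcal{F}_i)$) iff for each location $\ell$ of $\mathcal{F}_i$ the events whose channel has $\ell$ as sender or recipient are linearly ordered and, as a sequence of labels $(\mathrm{chan}(e),\mathrm{msg}(e))$, lie in $\mathrm{traces}(\ell)$. $\mathcal{B}|_C$ keeps events with channel in $C$ and the restricted order. $\mathrm{lruns}_C(\mathcal{F}_i)=\{\mathcal{A}|_C:\mathcal{A}\in\mathrm{exec}(\mathcal{F}_i)\}$ and $J^{i,C'}_{C}(\mathcal{B})=\{\mathcal{A}|_{C'}:\mathcal{A}\in\mathrm{exec}(\mathcal{F}_i),\ \mathcal{A}|_C=\mathcal{B}\}$. A set $L_0$ of locations is shared between $\mathcal{F}_1$ and $\mathcal{F}_2$ (with locations $\mathcal{LO}_i$, channels $\mathcal{CH}_i$) iff $L_0\subseteq\mathcal{LO}_1\cap\mathcal{LO}_2$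 and each $\ell\in L_0$ has the same channel endpoints and the same trace set in both frames. Then $\mathrm{LEFT}_0=\{c\in\mathcal{CH}_1:$ both endpoints of $c$ are in $L_0\}$, $C_{cut,0}=\{c\in\mathcal{CH}_1:$ exactly one endpoint of $c$ is in $L_0\}$, and $\mathrm{RIGHT}_i=\{c\in\mathcal{CH}_i:$ no endpoint of $c$ is in $L_0\}$. *)

(* Defs.v *)
From Stdlib Require Import List.
Import ListNotations.
Set Implicit Arguments.

Section Frames.
(* Universes: locations, channels, data (pairwise disjoint: distinct types),
   and the common set of events E with chan / msg. *)
Variables (Loc Chan Data E : Type) (chan : E -> Chan) (msg : E -> Data).

Definition label := (Chan * Data)%type.

(* A finite or infinite sequence of labels: s k = None means "length <= k". *)
Definition lseq := nat -> option label.
Definition lseq_wf (s : lseq) : Prop := forall n, s n = None -> s (S n) = None.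
Definition lprefix (n : nat) (s : lseq) : lseq :=
  fun k => if Nat.ltb k n then s k else None.

Record frame := Frame {
  f_locs : Loc -> Prop;
  f_chans : Chan -> Prop;
  f_ends : Chan -> option (Loc * Loc);        (* Some (sender, recipient) or None *)
  f_traces : Loc -> lseq -> Prop
}.

Definition in_chans (F : frame) (l : Loc) (c : Chan) : Prop :=
  exists s r, f_ends F c = Some (s, r) /\ (s = l \/ r = l).

Definition wf_frame (F : frame) : Prop :=
  (forall c, ~ f_chans F c -> f_ends F c = None) /\
  (forall c s r, f_ends F c = Some (s, r) -> f_chans F c /\ f_locs F s /\ f_locs F r) /\
  (forall l t, f_traces F l t -> lseq_wf t) /\
  (forall l t k c v, f_traces F l t -> t k = Some (c, v) -> in_chans F l c) /\
  (forall l t n, f_traces F l t -> f_traces F l (lprefix n t)).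

Record sys := Sys { ev : E -> Prop; ord : E -> E -> Prop }.

Definition wf_sys (A : sys) : Prop :=
  (forall x y, ord A x y -> ev A x /\ ev A y) /\
  (forall x, ev A x -> ord A x x) /\
  (forall x y, ord A x y -> ord A y x -> x = y) /\
  (forall x y z, ord A x y -> ord A y z -> ord A x z) /\
  (forall e, ev A e -> exists l : list E, forall x, ord A x e -> In x l).

Definition has_rank (P : E -> Prop) (o : E -> E -> Prop) (e : E) (k : nat) : Prop :=
  exists l : list E, NoDup l /\ length l = k /\
    (forall x, In x l <-> (P x /\ o x e /\ x <> e)).

(* s is the sequence of labels of the (linearly ordered) events satisfying P *)
Definition represents (P : E -> Prop) (o : E -> E -> Prop) (s : lseq) : Prop :=
  forall k lab, s k = Some lab <->
    exists e, P e /\ has_rank P o e k /\ (chan e, msg e) = lab.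

Definition loc_events (F : frame) (A : sys) (l : Loc) (e : E) : Prop :=
  ev A e /\ in_chans F l (chan e).

Definition exec (F : frame) (A : sys) : Prop :=
  wf_sys A /\
  forall l, f_locs F l ->
    (forall x y, loc_events F A l x -> loc_events F A l y -> ord A x y \/ ord A y x) /\
    exists s, represents (loc_events F A l) (ord A) s /\ f_traces F l s.

Definition restrict (C : Chan -> Prop) (A : sys) : sys :=
  Sys (fun e => ev A e /\ C (chan e))
      (fun x y => ord A x y /\ C (chan x) /\ C (chan y)).

Definition lruns (F : frame) (C : Chan -> Prop) (B : sys) : Prop :=
  exists A, exec F A /\ restrict C A = B.

(* J^{F, C'}_C(B) as a set of systems *)
Definition J (F : frame) (C C' : Chan -> Prop) (B : sys) (B' : sys) : Prop :=
  exists A, exec F A /\ restrict C A = B /\ restrict C' A = B'.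

Definition shared (L0 : Loc -> Prop) (F1 F2 : frame) : Prop :=
  forall l, L0 l ->
    f_locs F1 l /\ f_locs F2 l /\
    (forall c, in_chans F1 l c \/ in_chans F2 l c -> f_ends F1 c = f_ends F2 c) /\
    (forall t, f_traces F1 l t <-> f_traces F2 l t).

Definition LEFT (L0 : Loc -> Prop) (F1 : frame) (c : Chan) : Prop :=
  f_chans F1 c /\ exists s r, f_ends F1 c = Some (s, r) /\ L0 s /\ L0 r.

Definition Ccut (L0 : Loc -> Prop) (F1 : frame) (c : Chan) : Prop :=
  f_chans F1 c /\ exists s r, f_ends F1 c = Some (s, r) /\
    ((L0 s /\ ~ L0 r) \/ (~ L0 s /\ L0 r)).

Definition RIGHT (L0 : Loc -> Prop) (F : frame) (c : Chan) : Prop :=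
  f_chans F c /\ (f_ends F c = None \/
    exists s r, f_ends F c = Some (s, r) /\ ~ L0 s /\ ~ L0 r).

End Frames.

(* Main.v *)
Require Import Defs.
From Stdlib Require Import List Classical FunctionalExtensionality PropExtensionality.
Import ListNotations.

Lemma sys_ext {E : Type} (A B : sys E) :
  (forall e, ev A e <-> ev B e) -> (forall x y, ord A x y <-> ord B x y) -> A = B.
Proof.
  destruct A as [a1 a2], B as [b1 b2]; simpl; intros H1 H2.
  assert (a1 = b1) by (apply functional_extensionality; intro; apply propositional_extensionality; auto).
  assert (a2 = b2) by (do 2 (apply functional_extensionality; intro); apply propositional_extensionality; auto).
  subst; reflexivity.
Qed.

Definition rr {E Chan : Type} (chan : E -> Chan) (P : Chan -> Prop) (A : sys E) (x y : E) :=
  ord A x y /\ P (chan x) /\ P (chan y).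

Definition rt {Chan : Type} (P Q : Chan -> Prop) (c : Chan) := ~ P c \/ Q c.

Definition glue {E Chan : Type} (chan : E -> Chan) (P Q : Chan -> Prop) (Al Ar : sys E) : sys E :=
  Sys (fun e => (ev Al e /\ P (chan e)) \/ (ev Ar e /\ ~ P (chan e)))
      (fun x y => rr chan P Al x y \/ rr chan (rt P Q) Ar x y \/
         (exists c, rr chan (rt P Q) Ar x c /\ rr chan P Al c y) \/
         (exists c, rr chan P Al x c /\ rr chan (rt P Q) Ar c y)).

Lemma preds_list {E : Type} (A : sys E) : wf_sys A ->
  forall e, exists l : list E, forall x, ord A x e -> In x l.
Proof.
  intros [h1 [_ [_ [_ h5]]]] e.
  destruct (classic (ev A e)) as [he|he]; [exact (h5 e he)|].
  exists []; intros x hx; apply h1 in hx; tauto.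
Qed.

Lemma list_collect {E : Type} (f : E -> E -> Prop) :
  (forall c, exists lc, forall x, f x c -> In x lc) ->
  forall l : list E, exists L, forall c x, In c l -> f x c -> In x L.
Proof.
  intros hf l; induction l as [|a l IH].
  - exists []; intros c x [].
  - destruct IH as [L HL]; destruct (hf a) as [la Ha].
    exists (la ++ L); intros c x [<-|hc] hx; apply in_or_app; eauto.
Qed.

Lemma has_rank_ext {E : Type} (P P' : E -> Prop) (o o' : E -> E -> Prop) e k :
  (forall x, P x <-> P' x) -> (forall x, P x -> P e -> (o x e <-> o' x e)) -> P e ->
  has_rank P o e k -> has_rank P' o' e k.
Proof.
  intros hP ho he [l [h1 [h2 h3]]]; exists l; split; auto; split; auto.
  intro x; rewrite h3; split.
  - intros [a [b c]]; split; [apply hP; auto|split; auto]. apply ho; auto.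
  - intros [a [b c]]. assert (P x) by (apply hP; auto). split; auto; split; auto.
    apply ho; auto.
Qed.

Lemma represents_ext {E Chan Data : Type} (chan : E -> Chan) (msg : E -> Data)
  (P P' : E -> Prop) (o o' : E -> E -> Prop) s :
  (forall x, P x <-> P' x) -> (forall x y, P x -> P y -> (o x y <-> o' x y)) ->
  represents chan msg P o s -> represents chan msg P' o' s.
Proof.
  intros hP ho H k lab; rewrite (H k lab); split.
  - intros [e [a [b c]]]; exists e; split; [apply hP; auto|split; auto].
    eapply has_rank_ext; [exact hP| |exact a|exact b]; intros; apply ho; auto.
  - intros [e [a [b c]]]; exists e. assert (P e) by (apply hP; auto). split; auto; split; auto.
    eapply has_rank_ext; [| |exact a|exact b].
    + intro x; split; apply hP.
    + intros x h1 h2; apply hP in h1; apply hP in h2; symmetry; apply ho; auto.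
Qed.

Lemma glue_exec {Loc Chan Data E : Type} (chan : E -> Chan) (msg : E -> Data)
  (Fl Ft : frame Loc Chan Data) (L0 : Loc -> Prop) (P Q : Chan -> Prop)
  (hQP : forall c, Q c -> P c)
  (hL : forall l, f_locs Ft l -> L0 l -> f_locs Fl l /\ (forall c, in_chans Ft l c -> P c) /\
        (forall c, in_chans Ft l c <-> in_chans Fl l c) /\ (forall t, f_traces Ft l t <-> f_traces Fl l t))
  (hR : forall l, f_locs Ft l -> ~ L0 l -> forall c, in_chans Ft l c -> rt P Q c)
  (Al Ar : sys E) (exl : exec chan msg Fl Al) (exr : exec chan msg Ft Ar)
  (hQ : restrict chan Q Al = restrict chan Q Ar) :
  exec chan msg Ft (glue chan P Q Al Ar) /\
  (forall C, (forall c, C c -> P c) -> restrict chan C (glue chan P Q Al Ar) = restrict chan C Al) /\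
  (forall C, (forall c, C c -> rt P Q c) -> restrict chan C (glue chan P Q Al Ar) = restrict chan C Ar).
Proof.
  destruct exl as [wfl locl]; destruct exr as [wfr locr].
  pose proof (preds_list Al wfl) as pl; pose proof (preds_list Ar wfr) as pr.
  destruct wfl as [evl [refl [antl [trl _]]]]; destruct wfr as [evr [refr [antr [trr _]]]].
  assert (evQ : forall e, Q (chan e) -> (ev Al e <-> ev Ar e)).
  { intros e qe. pose proof (f_equal (fun S => ev S e) hQ) as H; simpl in H.
    split; intro h.
    - assert (X : ev Ar e /\ Q (chan e)) by (rewrite <- H; split; assumption); tauto.
    - assert (X : ev Al e /\ Q (chan e)) by (rewrite H; split; assumption); tauto. }
  assert (ordQ : forall x y, Q (chan x) -> Q (chan y) -> (ord Al x y <-> ord Ar x y)).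
  { intros x y qx qy. pose proof (f_equal (fun S => ord S x y) hQ) as H; simpl in H.
    split; intro h.
    - assert (X : ord Ar x y /\ Q (chan x) /\ Q (chan y)) by (rewrite <- H; auto); tauto.
    - assert (X : ord Al x y /\ Q (chan x) /\ Q (chan y)) by (rewrite H; auto); tauto. }
  set (L := rr chan P Al). set (R := rr chan (rt P Q) Ar).
  assert (PQ : forall c, P c -> rt P Q c -> Q c) by (unfold rt; tauto).
  assert (QP : forall c, Q c -> rt P Q c) by (unfold rt; tauto).
  assert (bridge : forall x y, Q (chan x) -> Q (chan y) -> (L x y <-> R x y)).
  { intros x y qx qy; unfold L, R, rr; rewrite ordQ by auto; split; intros [a _]; auto. }
  assert (Ltr : forall x y z, L x y -> L y z -> L x z).
  { unfold L, rr; intros x y z [a [b c]] [d [e f]]; eauto. }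
  assert (Rtr : forall x y z, R x y -> R y z -> R x z).
  { unfold R, rr; intros x y z [a [b c]] [d [e f]]; eauto. }
  assert (LP : forall x y, L x y -> P (chan x) /\ P (chan y)) by (unfold L, rr; tauto).
  assert (RP : forall x y, R x y -> rt P Q (chan x) /\ rt P Q (chan y)) by (unfold R, rr; tauto).
  set (G := glue chan P Q Al Ar).
  assert (Gdef : forall x y, ord G x y <-> (L x y \/ R x y \/ (exists c, R x c /\ L c y) \/
                 (exists c, L x c /\ R c y))) by (intros; reflexivity).
  assert (Lrefl : forall y, ev Al y -> P (chan y) -> L y y) by (unfold L, rr; auto).
  assert (Rrefl : forall y, ev Ar y -> rt P Q (chan y) -> R y y) by (unfold R, rr; auto).
  assert (Lev : forall x y, L x y -> ev Al x /\ ev Al y).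
  { unfold L, rr; intros x y [a _]; auto. }
  assert (Rev : forall x y, R x y -> ev Ar x /\ ev Ar y).
  { unfold R, rr; intros x y [a _]; auto. }
  assert (lchar : forall x y, P (chan x) -> P (chan y) -> (ord G x y <-> L x y)).
  { intros x y px py; rewrite Gdef; split; [|tauto].
    intros [h|[h|[[c [h1 h2]]|[c [h1 h2]]]]]; auto.
    - destruct (RP _ _ h); apply bridge; auto.
    - destruct (RP _ _ h1); destruct (LP _ _ h2).
      apply Ltr with c; auto; apply bridge; auto.
    - destruct (RP _ _ h2); destruct (LP _ _ h1).
      apply Ltr with c; auto; apply bridge; auto. }
  assert (rchar : forall x y, rt P Q (chan x) -> rt P Q (chan y) -> (ord G x y <-> R x y)).
  { intros x y px py; rewrite Gdef; split; [|tauto].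
    intros [h|[h|[[c [h1 h2]]|[c [h1 h2]]]]]; auto.
    - destruct (LP _ _ h); apply bridge; auto.
    - destruct (RP _ _ h1); destruct (LP _ _ h2).
      apply Rtr with c; auto; apply bridge; auto.
    - destruct (RP _ _ h2); destruct (LP _ _ h1).
      apply Rtr with c; auto; apply bridge; auto. }
  assert (nf_in_rt : forall x y, rt P Q (chan y) -> ord G x y -> R x y \/ exists c, L x c /\ R c y).
  { intros x y hy h; rewrite Gdef in h.
    destruct h as [h|[h|[[c [h1 h2]]|[c [h1 h2]]]]]; eauto.
    - destruct (LP _ _ h). right; exists y; split; auto.
      apply Rrefl; auto. apply evQ; auto. apply (Lev _ _ h).
    - destruct (LP _ _ h2). left; apply Rtr with c; auto; apply bridge; auto.
      destruct (RP _ _ h1); auto. }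
  assert (nf_out_rt : forall y z, rt P Q (chan y) -> ord G y z -> R y z \/ exists c, R y c /\ L c z).
  { intros y z hy h; rewrite Gdef in h.
    destruct h as [h|[h|[[c [h1 h2]]|[c [h1 h2]]]]]; eauto.
    - destruct (LP _ _ h). right; exists y; split; auto.
      apply Rrefl; auto. apply evQ; auto. apply (Lev _ _ h).
    - destruct (LP _ _ h1). left; apply Rtr with c; auto; apply bridge; auto.
      destruct (RP _ _ h2); auto. }
  assert (nf_in_P : forall x y, P (chan y) -> ord G x y -> L x y \/ exists c, R x c /\ L c y).
  { intros x y hy h; rewrite Gdef in h.
    destruct h as [h|[h|[[c [h1 h2]]|[c [h1 h2]]]]]; eauto.
    - destruct (RP _ _ h). right; exists y; split; auto.
      apply Lrefl; auto. apply evQ; auto. apply (Rev _ _ h).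
    - destruct (RP _ _ h2). left; apply Ltr with c; auto; apply bridge; auto.
      destruct (LP _ _ h1); auto. }
  assert (nf_out_P : forall y z, P (chan y) -> ord G y z -> L y z \/ exists c, L y c /\ R c z).
  { intros y z hy h; rewrite Gdef in h.
    destruct h as [h|[h|[[c [h1 h2]]|[c [h1 h2]]]]]; eauto.
    - destruct (RP _ _ h). right; exists y; split; auto.
      apply Lrefl; auto. apply evQ; auto. apply (Rev _ _ h).
    - destruct (RP _ _ h1). left; apply Ltr with c; auto; apply bridge; auto.
      destruct (LP _ _ h2); auto. }
  assert (Gtr : forall x y z, ord G x y -> ord G y z -> ord G x z).
  { intros x y z hxy hyz. destruct (classic (P (chan y))) as [py|npy].
    - destruct (nf_in_P _ _ py hxy) as [a|[c [a1 a2]]];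
      destruct (nf_out_P _ _ py hyz) as [b|[c' [b1 b2]]]; rewrite Gdef.
      + left; eauto.
      + right; right; right; exists c'; split; eauto.
      + right; right; left; exists c; split; eauto.
      + destruct (RP _ _ a1); destruct (LP _ _ a2); destruct (LP _ _ b1); destruct (RP _ _ b2).
        right; left. apply Rtr with c; auto. apply Rtr with c'; auto.
        apply bridge; auto. eauto.
    - assert (py : rt P Q (chan y)) by (left; auto).
      destruct (nf_in_rt _ _ py hxy) as [a|[c [a1 a2]]];
      destruct (nf_out_rt _ _ py hyz) as [b|[c' [b1 b2]]]; rewrite Gdef.
      + right; left; eauto.
      + right; right; left; exists c'; split; eauto.
      + right; right; right; exists c; split; eauto.
      + destruct (LP _ _ a1); destruct (RP _ _ a2); destruct (RP _ _ b1); destruct (LP _ _ b2).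
        left. apply Ltr with c; auto. apply Ltr with c'; auto.
        apply bridge; auto. eauto. }
  assert (Gev : forall x, ev G x <-> ((ev Al x /\ P (chan x)) \/ (ev Ar x /\ ~ P (chan x)))) by (intros; reflexivity).
  assert (LevG : forall x, ev Al x -> P (chan x) -> ev G x) by (intros; apply Gev; auto).
  assert (RevG : forall x, ev Ar x -> rt P Q (chan x) -> ev G x).
  { intros x h1 h2; apply Gev. destruct (classic (P (chan x))); auto.
    left; split; auto; apply evQ; auto. }
  assert (GevP : forall x, P (chan x) -> (ev G x <-> ev Al x)).
  { intros x px; rewrite Gev; tauto. }
  assert (GevR : forall x, rt P Q (chan x) -> (ev G x <-> ev Ar x)).
  { intros x px; rewrite Gev; split.
    - intros [[a b]|[a b]]; auto. apply evQ; auto.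
    - intro; apply RevG; auto. }
  split; [split; [split; [|split; [|split; [|split]]]|] | split].
  -
    intros x y h; rewrite Gdef in h.
    destruct h as [h|[h|[[c [h1 h2]]|[c [h1 h2]]]]].
    + destruct (LP _ _ h), (Lev _ _ h); split; auto.
    + destruct (RP _ _ h), (Rev _ _ h); split; auto.
    + destruct (RP _ _ h1), (Rev _ _ h1), (LP _ _ h2), (Lev _ _ h2); split; auto.
    + destruct (LP _ _ h1), (Lev _ _ h1), (RP _ _ h2), (Rev _ _ h2); split; auto.
  - intros x hx; apply Gev in hx; rewrite Gdef; destruct hx as [[a b]|[a b]].
    + left; auto.
    + right; left; apply Rrefl; auto; left; auto.
  - intros x y hxy hyx.
    destruct (classic (P (chan x))) as [px|npx]; destruct (classic (P (chan y))) as [py|npy].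
    + apply lchar in hxy; auto; apply lchar in hyx; auto. apply antl; [apply hxy|apply hyx].
    + assert (ry : rt P Q (chan y)) by (left; auto).
      destruct (classic (Q (chan x))) as [qx|nqx].
      * apply rchar in hxy; auto; apply rchar in hyx; auto. apply antr; [apply hxy|apply hyx].
      * exfalso. destruct (nf_in_rt _ _ ry hxy) as [a|[c [a1 a2]]].
        { destruct (RP _ _ a) as [[hh|hh] _]; auto. }
        destruct (nf_in_P _ _ px hyx) as [b|[c' [b1 b2]]].
        { destruct (LP _ _ b); auto. }
        destruct (LP _ _ a1); destruct (RP _ _ a2); destruct (RP _ _ b1); destruct (LP _ _ b2).
        assert (hcc : L c c') by (apply bridge; auto; eauto).
        assert (hc'c : L c' c) by eauto. assert (c = c') by (apply antl; [apply hcc|apply hc'c]).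
        subst c'. assert (x = c) by (apply antl; [apply a1|apply b2]). subst; auto.
    + assert (rx : rt P Q (chan x)) by (left; auto).
      destruct (classic (Q (chan y))) as [qy|nqy].
      * apply rchar in hxy; auto; apply rchar in hyx; auto. apply antr; [apply hxy|apply hyx].
      * exfalso. destruct (nf_in_rt _ _ rx hyx) as [a|[c [a1 a2]]].
        { destruct (RP _ _ a) as [[hh|hh] _]; auto. }
        destruct (nf_in_P _ _ py hxy) as [b|[c' [b1 b2]]].
        { destruct (LP _ _ b); auto. }
        destruct (LP _ _ a1); destruct (RP _ _ a2); destruct (RP _ _ b1); destruct (LP _ _ b2).
        assert (hcc : L c c') by (apply bridge; auto; eauto).
        assert (hc'c : L c' c) by eauto. assert (c = c') by (apply antl; [apply hcc|apply hc'c]).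
        subst c'. assert (y = c) by (apply antl; [apply a1|apply b2]). subst; auto.
    + assert (rx : rt P Q (chan x)) by (left; auto).
      assert (ry : rt P Q (chan y)) by (left; auto).
      apply rchar in hxy; auto; apply rchar in hyx; auto. apply antr; [apply hxy|apply hyx].
  - exact Gtr.
  - intros e _. destruct (pl e) as [l1 H1]; destruct (pr e) as [l2 H2].
    destruct (list_collect (fun x c => ord Ar x c) pr l1) as [M1 HM1].
    destruct (list_collect (fun x c => ord Al x c) pl l2) as [M2 HM2].
    exists (l1 ++ l2 ++ M1 ++ M2). intros x h; rewrite Gdef in h.
    repeat rewrite in_app_iff.
    destruct h as [h|[h|[[c [h1 h2]]|[c [h1 h2]]]]].
    + left; apply H1, h.
    + right; left; apply H2, h.
    + right; right; left. apply HM1 with c; [apply H1, h2|apply h1].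
    + right; right; right. apply HM2 with c; [apply H2, h2|apply h1].
  - intros l hl. destruct (classic (L0 l)) as [l0|nl0].
    + destruct (hL l hl l0) as [hl' [hP [hin htr]]].
      destruct (locl l hl') as [lin [s [rep tr]]].
      assert (leq : forall e, loc_events chan Ft G l e <-> loc_events chan Fl Al l e).
      { intro e; unfold loc_events. split; intros [a b].
        - assert (P (chan e)) by auto. split; [apply GevP; auto|apply hin; auto].
        - apply hin in b. assert (P (chan e)) by auto. split; [apply GevP; auto|auto]. }
      assert (oeq : forall x y, loc_events chan Ft G l x -> loc_events chan Ft G l y -> (ord G x y <-> ord Al x y)).
      { intros x y [_ bx] [_ by_]. rewrite lchar by auto. unfold L, rr; split; [tauto|auto]. }
      split.
      * intros x y hx hy. rewrite !oeq by auto. apply lin; apply leq; auto.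
      * exists s; split; [|apply htr; auto].
        eapply represents_ext; [| |exact rep].
        -- intro x; symmetry; apply leq.
        -- intros x y hx hy. apply leq in hx; apply leq in hy. symmetry; apply oeq; auto.
    + pose proof (hR l hl nl0) as hr.
      destruct (locr l hl) as [lin [s [rep tr]]].
      assert (leq : forall e, loc_events chan Ft G l e <-> loc_events chan Ft Ar l e).
      { intro e; unfold loc_events. split; intros [a b].
        - split; [apply GevR; auto|auto].
        - split; [apply GevR; auto|auto]. }
      assert (oeq : forall x y, loc_events chan Ft G l x -> loc_events chan Ft G l y -> (ord G x y <-> ord Ar x y)).
      { intros x y [_ bx] [_ by_]. rewrite rchar by auto. unfold R, rr; split; [tauto|auto]. }
      split.
      * intros x y hx hy. rewrite !oeq by auto. apply lin; apply leq; auto.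
      * exists s; split; [|auto].
        eapply represents_ext; [| |exact rep].
        -- intro x; symmetry; apply leq.
        -- intros x y hx hy. apply leq in hx; apply leq in hy. symmetry; apply oeq; auto.
  - intros C hC; apply sys_ext; simpl.
    + intro e; split; intros [a b]; split; auto.
      all: first [apply GevP in a; auto | apply GevP; auto].
    + intros x y; split; intros [a [b c]]; (split; [|auto]).
      all: first [apply lchar in a; auto; apply a | apply lchar; auto; unfold L, rr; auto].
  - intros C hC; apply sys_ext; simpl.
    + intro e; split; intros [a b]; split; auto.
      all: first [apply GevR in a; auto | apply GevR; auto].
    + intros x y; split; intros [a [b c]]; (split; [|auto]).
      all: first [apply rchar in a; auto; apply a | apply rchar; auto; unfold R, rr; auto].
Qed.

Theorem lemma8 (Loc Chan Data E : Type) (chan : E -> Chan) (msg : E -> Data)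
  (F1 F2 : frame Loc Chan Data) (L0 : Loc -> Prop)
  (wf1 : wf_frame F1) (wf2 : wf_frame F2) (hsh : shared L0 F1 F2)
  (Cs : Chan -> Prop) (hCs : forall c, Cs c -> LEFT L0 F1 c) :
  (forall Bc : sys E,
     lruns chan msg F1 (Ccut L0 F1) Bc -> lruns chan msg F2 (Ccut L0 F1) Bc ->
     forall X : sys E,
       J chan msg F1 (Ccut L0 F1) Cs Bc X <-> J chan msg F2 (Ccut L0 F1) Cs Bc X)
  /\
  ((forall B : sys E, lruns chan msg F2 (Ccut L0 F1) B -> lruns chan msg F1 (Ccut L0 F1) B) ->
   forall (Co : Chan -> Prop) (Bo : sys E),
     (forall c, Co c -> RIGHT L0 F2 c) ->
     lruns chan msg F2 Co Bo ->
     forall X : sys E,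
       J chan msg F2 Co Cs Bo X <->
       exists Bc' : sys E, J chan msg F2 Co (Ccut L0 F1) Bo Bc' /\
                           J chan msg F1 (Ccut L0 F1) Cs Bc' X).
Proof.
  set (P := fun c => exists s r, f_ends F1 c = Some (s, r) /\ (L0 s \/ L0 r)).
  set (Q := Ccut L0 F1).
  destruct wf1 as [_ [w1 _]].
  assert (hQP : forall c, Q c -> P c).
  { intros c [_ [s [r [h hh]]]]; exists s, r; split; tauto. }
  assert (ch12 : forall l c, L0 l -> (in_chans F1 l c <-> in_chans F2 l c)).
  { intros l c hl. destruct (hsh l hl) as [_ [_ [he _]]].
    unfold in_chans; split; intro h.
    - rewrite <- he by (left; exact h); exact h.
    - rewrite he by (right; exact h); exact h. }
  assert (inP1 : forall l c, L0 l -> in_chans F1 l c -> P c).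
  { intros l c hl [s [r [h hh]]]; exists s, r; split; auto; destruct hh; subst; auto. }
  assert (rF1 : forall l c, ~ L0 l -> in_chans F1 l c -> rt P Q c).
  { intros l c hl [s [r [h hh]]]. destruct (classic (P c)) as [pc|pc]; [right|left; auto].
    destruct pc as [s' [r' [h' hh']]]. rewrite h in h'; injection h' as <- <-.
    split; [apply (w1 c s r h)|]. exists s, r; split; auto.
    destruct hh as [<-|<-]; tauto. }
  assert (rF2 : forall l c, ~ L0 l -> in_chans F2 l c -> rt P Q c).
  { intros l c hl hc. destruct (classic (P c)) as [pc|pc]; [|left; auto].
    apply (rF1 l c hl). destruct pc as [s [r [h hh]]].
    assert (e : f_ends F1 c = f_ends F2 c).
    { destruct hh as [h0|h0]; destruct (hsh _ h0) as [_ [_ [he _]]]; apply he; left;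
      exists s, r; auto. }
    unfold in_chans in *; rewrite e; exact hc. }
  assert (hL12 : forall l, f_locs F2 l -> L0 l -> f_locs F1 l /\ (forall c, in_chans F2 l c -> P c) /\
        (forall c, in_chans F2 l c <-> in_chans F1 l c) /\ (forall t, f_traces F2 l t <-> f_traces F1 l t)).
  { intros l _ hl; destruct (hsh l hl) as [a [_ [_ d]]]; repeat split; auto.
    - intros c hc; apply (inP1 l c hl); apply ch12; auto.
    - apply ch12; auto.
    - apply ch12; auto.
    - apply d. - apply d. }
  assert (hL21 : forall l, f_locs F1 l -> L0 l -> f_locs F2 l /\ (forall c, in_chans F1 l c -> P c) /\
        (forall c, in_chans F1 l c <-> in_chans F2 l c) /\ (forall t, f_traces F1 l t <-> f_traces F2 l t)).
  { intros l _ hl; destruct (hsh l hl) as [_ [b [_ d]]]; repeat split; auto.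
    - intros c hc; apply (inP1 l c hl); auto.
    - apply ch12; auto.
    - apply ch12; auto.
    - apply d. - apply d. }
  assert (hR1 : forall l, f_locs F1 l -> ~ L0 l -> forall c, in_chans F1 l c -> rt P Q c)
    by (intros; eapply rF1; eauto).
  assert (hR2 : forall l, f_locs F2 l -> ~ L0 l -> forall c, in_chans F2 l c -> rt P Q c)
    by (intros; eapply rF2; eauto).
  assert (CsP : forall c, Cs c -> P c).
  { intros c hc; destruct (hCs c hc) as [_ [s [r [h [a b]]]]]; exists s, r; auto. }
  assert (QR : forall c, Q c -> rt P Q c) by (unfold rt; tauto).
  split.
  - intros Bc [A1' [ex1' r1']] [A2' [ex2' r2']] X; split.
    + intros [A1 [ex1 [ra rb]]].
      destruct (glue_exec chan msg F1 F2 L0 P Q hQP hL12 hR2 A1 A2' ex1 ex2'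
                  (eq_trans ra (eq_sym r2'))) as [ex [hl hr]].
      exists (glue chan P Q A1 A2'); split; auto; split.
      * rewrite hr; auto.
      * rewrite hl; auto.
    + intros [A2 [ex2 [ra rb]]].
      destruct (glue_exec chan msg F2 F1 L0 P Q hQP hL21 hR1 A2 A1' ex2 ex1'
                  (eq_trans ra (eq_sym r1'))) as [ex [hl hr]].
      exists (glue chan P Q A2 A1'); split; auto; split.
      * rewrite hr; auto.
      * rewrite hl; auto.
  - intros hsub Co Bo hCo _ X.
    assert (CoR : forall c, Co c -> rt P Q c).
    { intros c hc; left; intros [s [r [h hh]]].
      destruct (hCo c hc) as [_ hr].
      assert (e : f_ends F1 c = f_ends F2 c).
      { destruct hh as [h0|h0]; destruct (hsh _ h0) as [_ [_ [he _]]]; apply he; left;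
        exists s, r; auto. }
      rewrite <- e, h in hr. destruct hr as [hr|[s' [r' [h' [a b]]]]]; [discriminate|].
      injection h' as <- <-; tauto. }
    split.
    + intros [A [ex [ra rb]]].
      exists (restrict chan Q A); split.
      * exists A; auto.
      * destruct (hsub (restrict chan Q A) (ex_intro _ A (conj ex eq_refl))) as [A' [ex' r']].
        destruct (glue_exec chan msg F2 F1 L0 P Q hQP hL21 hR1 A A' ex ex' (eq_sym r'))
          as [exg [hl hr]].
        exists (glue chan P Q A A'); split; auto; split.
        -- rewrite hr; auto.
        -- rewrite hl; auto.
    + intros [Bc' [[A2 [ex2 [ra rb]]] [A1 [ex1 [rc rd]]]]].
      destruct (glue_exec chan msg F1 F2 L0 P Q hQP hL12 hR2 A1 A2 ex1 ex2
                  (eq_trans rc (eq_sym rb))) as [exg [hl hr]].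
      exists (glue chan P Q A1 A2); split; auto; split.
      * rewrite hr; auto.
      * rewrite hl; auto.
Qed.
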